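(* Let $T\ge 2$ be an integer, $v>0$, $\theta\in(0,1)$, $\beta\in(0,1]$, and suppose $\theta\ge\beta>\theta^T$. Let $\nu:=\lfloor \log\beta/\log\theta\rfloor$. Consider the stopping problem on times $\{0,1,\dots,T\}$ in which, from the perspective of time $t$, stopping at time $t+j$ ($0\le j\le T-t$) has value $\theta^{T-t}v$ if $j=0$ and $\beta\theta^{T-t-j}v$ if $j\ge1$. A (pure) strategy is a map $\sigma:\{0,\dots,T\}\to\{0,1\}$ with $\sigma(T)=1$ ($1$ = stop, $0$ = continue); for $t<T$ let $\tau_\sigma(t)=\min\{s>t:\sigma(s)=1\}$. Define: - the naive strategy $\sigma_0$: $\sigma_0(T)=1$ and for $t<T$, $\sigma_0(t)=1$ iff $\theta^{T-t}v\ge\max_{1\le j\le T-t}\beta\theta^{T-t-j}v$; - the update $\sigma\mapsto\sigma'$: $\sigma'(T)=1$ and for $t<T$, $\sigma'(t)=1$ iff $\theta^{T-t}v\ge\beta\theta^{T-\tau_\sigma(t)}v$; set $\sigma_{n+1}=\sigma_n'$ for $n\ge 0$; - the sophisticated strategy $\sigma_S$: $\sigma_S(T)=1$ and, backward for $t=T-1,\dots,0$, $\sigma_S(t)=1$ iff $\theta^{T-t}v\ge\beta\theta^{T-\tau_{\sigma_S}(t)}v$. Then $\nu\in\{1,2,\dots,T-1\}$, and $\sigma_n=\sigma_S$ for $n=\lceil T/\nu\rceil$; that is, the naive strategy is turned into the sophisticated one after $\lceil T/\nu\rceil$ rounds of training.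
   Context: This is the present-biased optimal stopping problem with immediate reward: stopping at absolute time $s$ yields reward $\theta^{T-s}v$ (so waiting increases the reward by a factor $1/\theta$ per period), and any reward not received immediately is additionally discounted by the present-bias factor $\beta$. The problem is state-independent, so strategies depend only on time. Ties are broken in favour of stopping. In each training round the agent at time $t$ chooses whether to stop now, taking as given that from time $t+1$ on she follows the previous round's strategy. *)

(* Defs.v *)
From Stdlib Require Import Reals Lra Lia ZArith Arith List.
Open Scope R_scope.

(* A pure strategy: time -> bool (true = stop). Only times 0..T matter. *)
Definition strategy := nat -> bool.

Definition Rleb (x y : R) : bool := if Rle_dec x y then true else false.

Definition Rceil (r : R) : Z := (- Int_part (- r))%Z.

(* search fuel s: first s' >= s (within fuel steps) with sigma s' = true,
   returning the last position reached otherwise. *)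
Fixpoint search (sigma : strategy) (fuel s : nat) : nat :=
  match fuel with
  | O => s
  | S f => if sigma s then s else search sigma f (S s)
  end.

(* tau_sigma(t) = min { s > t : sigma s = 1 }, s ranging in (t, T]
   (returns T when no earlier stop; sigma T = 1 for all strategies here). *)
Definition tau (sigma : strategy) (T t : nat) : nat :=
  search sigma (T - S t) (S t).

Definition naive (T : nat) (theta beta v : R) : strategy := fun t =>
  if (T <=? t)%nat then true
  else forallb (fun j => Rleb (beta * theta ^ (T - t - j) * v) (theta ^ (T - t) * v))
               (seq 1 (T - t)).

Definition update (T : nat) (theta beta v : R) (sigma : strategy) : strategy :=
  fun t =>
  if (T <=? t)%nat then true
  else Rleb (beta * theta ^ (T - tau sigma T t) * v) (theta ^ (T - t) * v).

Fixpoint trained (T : nat) (theta beta v : R) (n : nat) : strategy :=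
  match n with
  | O => naive T theta beta v
  | S m => update T theta beta v (trained T theta beta v m)
  end.

(* Sophisticated strategy by backward induction: soph_aux k is correct on
   times >= T - k (and is "stop" elsewhere, which is never consulted). *)
Fixpoint soph_aux (T : nat) (theta beta v : R) (k : nat) : strategy :=
  match k with
  | O => fun _ => true
  | S k' => fun s =>
      if (s =? T - S k')%nat
      then Rleb (beta * theta ^ (T - tau (soph_aux T theta beta v k') T s) * v)
                (theta ^ (T - s) * v)
      else soph_aux T theta beta v k' s
  end.

Definition sophisticated (T : nat) (theta beta v : R) : strategy :=
  soph_aux T theta beta v T.

(* Main.v *)
Require Import Defs.
From Stdlib Require Import Reals ZArith Arith.
From Stdlib Require Import Lra Lia List.
Open Scope R_scope.

Lemma search_ge sg f s : (s <= search sg f s)%nat.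
Proof. revert s; induction f; intro s; simpl; [lia|]. destruct (sg s); [lia|]. specialize (IHf (S s)); lia. Qed.

Lemma search_le_stop sg f s s' : (s <= s' <= s + f)%nat -> sg s' = true -> (search sg f s <= s')%nat.
Proof.
  revert s; induction f; intros s H Hs; simpl.
  - lia.
  - destruct (sg s) eqn:E; [lia|]. destruct (Nat.eq_dec s s') as [->|]; [congruence|].
    apply IHf; auto; lia.
Qed.

Lemma search_stop sg f s : sg s = true -> search sg f s = s.
Proof. destruct f; simpl; auto. intros ->; auto. Qed.

Lemma pow_01 th k : 0 < th < 1 -> 0 < th ^ k <= 1.
Proof. intros H. induction k; simpl; [lra|]. split; nra. Qed.

Lemma Rleb_true x y : x <= y -> Rleb x y = true.
Proof. unfold Rleb; destruct (Rle_dec x y); auto; lra. Qed.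

Section S.
Variables (T : nat) (v theta beta : R) (nu : nat).
Hypotheses (Hv : 0 < v) (Hth : 0 < theta < 1) (Hb : 0 < beta <= 1) (Hnu : (1 <= nu)%nat)
  (K : forall k, (k <= nu)%nat -> beta <= theta ^ k).

Lemma Rkey a k : (k <= nu)%nat -> beta * theta ^ a * v <= theta ^ (a + k) * v.
Proof.
  intros Hk. apply Rmult_le_compat_r; [lra|]. rewrite pow_add.
  pose proof (K k Hk). pose proof (pow_01 theta a Hth). nra.
Qed.

Lemma upd_true sg t : (t < T)%nat -> (S t <= tau sg T t <= T)%nat -> (tau sg T t - t <= nu)%nat ->
  update T theta beta v sg t = true.
Proof.
  intros H1 H2 H3. unfold update. destruct (T <=? t)%nat eqn:E; auto.
  apply Rleb_true. replace (T - t)%nat with ((T - tau sg T t) + (tau sg T t - t))%nat by lia.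
  apply Rkey; auto.
Qed.

Lemma tau_bounds sg t : (t < T)%nat -> (S t <= tau sg T t <= T)%nat \/ True.
Proof. auto. Qed.

Lemma tau_ge sg t : (S t <= tau sg T t)%nat.
Proof. apply search_ge. Qed.

Lemma tau_le sg t s : (t < s <= T)%nat -> sg s = true -> (tau sg T t <= s)%nat.
Proof. intros H Hs. apply search_le_stop; auto; lia. Qed.

Lemma naive_true t : (t <= T)%nat -> (T - t <= nu)%nat -> naive T theta beta v t = true.
Proof.
  intros H1 H2. unfold naive. destruct (T <=? t)%nat; auto.
  apply forallb_forall. intros j Hj. apply Rleb_true.
  apply Rmult_le_compat_r; [lra|].
  pose proof (K _ H2). pose proof (pow_01 theta (T - t - j) Hth). nra.
Qed.

Lemma trained_true n t : (t <= T)%nat -> (T - t <= S n * nu)%nat -> trained T theta beta v n t = true.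
Proof.
  revert t; induction n; intros t H1 H2.
  - simpl. apply naive_true; lia.
  - simpl trained. destruct (Nat.lt_ge_cases t T) as [Ht|Ht].
    2:{ unfold update. replace (T <=? t)%nat with true by (symmetry; apply Nat.leb_le; lia). auto. }
    destruct (Nat.le_gt_cases (T - S t) (S n * nu)) as [C|C].
    + assert (E: trained T theta beta v n (S t) = true) by (apply IHn; lia).
      assert (Et : tau (trained T theta beta v n) T t = S t) by (unfold tau; apply search_stop; auto).
      apply upd_true; rewrite ?Et; lia.
    + set (m := (S n * nu)%nat) in *.
      assert (Hm : (S (S n) * nu = m + nu)%nat) by (unfold m; simpl; lia).
      set (s := (T - m)%nat).
      assert (Es : trained T theta beta v n s = true) by (apply IHn; unfold s; lia).
      pose proof (tau_le (trained T theta beta v n) t s ltac:(unfold s; lia) Es).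
      pose proof (tau_ge (trained T theta beta v n) t).
      apply upd_true; lia.
Qed.

Lemma soph_true k s : (1 <= T)%nat -> soph_aux T theta beta v k s = true.
Proof.
  intros HT. revert s; induction k; intros s; simpl; auto.
  destruct (s =? T - S k)%nat eqn:E; auto.
  apply Nat.eqb_eq in E.
  unfold tau. rewrite (search_stop _ _ _ (IHk (S s))).
  apply Rleb_true. replace (T - s)%nat with ((T - S s) + 1)%nat by lia.
  apply Rkey; lia.
Qed.
End S.

Theorem proposition5p2 (T : nat) (v theta beta : R) :
  (2 <= T)%nat -> 0 < v -> 0 < theta < 1 -> 0 < beta <= 1 ->
  theta >= beta -> beta > theta ^ T ->
  let nu := Int_part (ln beta / ln theta) in
  (1 <= nu <= Z.of_nat T - 1)%Z /\
  (forall t : nat, (t <= T)%nat ->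
     trained T theta beta v (Z.to_nat (Rceil (INR T / IZR nu))) t
     = sophisticated T theta beta v t).
Proof.
  intros HT Hv Hth Hb Htb HbT nu.
  assert (Hlt : ln theta < 0) by (rewrite <- ln_1; apply ln_increasing; lra).
  assert (Hlb : ln beta <= ln theta).
  { destruct (Rle_lt_or_eq_dec beta theta) as [h|h]; try lra.
    apply Rlt_le, ln_increasing; lra. subst; lra. }
  assert (HlT : ln (theta ^ T) < ln beta) by (apply ln_increasing; [apply pow_lt; lra|lra]).
  rewrite ln_pow in HlT by lra.
  set (r := ln beta / ln theta) in *.
  assert (Hr1 : 1 <= r).
  { unfold r. apply (Rmult_le_reg_r (- ln theta)); [lra|].
    unfold Rdiv. replace (ln beta * / ln theta * - ln theta) with (- ln beta) by (field; lra). lra. }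
  assert (HrT : r < INR T).
  { unfold r. apply (Rmult_lt_reg_r (- ln theta)); [lra|].
    unfold Rdiv. replace (ln beta * / ln theta * - ln theta) with (- ln beta) by (field; lra). lra. }
  destruct (base_Int_part r) as [B1 B2]. fold nu in B1, B2.
  assert (N1 : (1 <= nu)%Z).
  { assert (0 < IZR nu) by lra. apply lt_IZR in H. lia. }
  assert (N2 : (nu <= Z.of_nat T - 1)%Z).
  { assert (IZR nu < IZR (Z.of_nat T)) by (rewrite <- INR_IZR_INZ; lra). apply lt_IZR in H. lia. }
  split; [lia|].
  set (nu' := Z.to_nat nu).
  assert (Hnu' : Z.of_nat nu' = nu) by (unfold nu'; lia).
  assert (K : forall k, (k <= nu')%nat -> beta <= theta ^ k).
  { intros k Hk. rewrite <- (exp_ln beta) by lra. rewrite <- Rpower_pow by lra.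
    unfold Rpower.
    assert (Hk' : INR k <= IZR nu) by (rewrite INR_IZR_INZ; apply IZR_le; lia).
    assert (ln beta <= INR k * ln theta).
    { assert (ln beta = r * ln theta) by (unfold r; field; lra). nra. }
    destruct (Rle_lt_or_eq_dec _ _ H) as [h|h]. apply Rlt_le, exp_increasing; lra. rewrite h; lra. }
  assert (HT1 : (1 <= T)%nat) by lia.
  intros t Ht. unfold sophisticated. rewrite (soph_true T v theta beta nu'); auto; try lia.
  set (c := Rceil (INR T / IZR nu)).
  assert (Hc : INR T / IZR nu <= IZR c).
  { unfold c, Rceil. destruct (base_Int_part (- (INR T / IZR nu))) as [C1 _].
    rewrite opp_IZR. lra. }
  assert (Hnupos : 0 < IZR nu) by (apply IZR_lt; lia).
  assert (Hc2 : IZR (Z.of_nat T) <= IZR (c * nu)).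
  { rewrite mult_IZR, <- INR_IZR_INZ. apply (Rmult_le_compat_r (IZR nu)) in Hc; [|lra].
    unfold Rdiv in Hc. rewrite Rmult_assoc, Rinv_l in Hc by lra. lra. }
  apply le_IZR in Hc2.
  apply (trained_true T v theta beta nu'); auto; try lia.
Qed.
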